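(* The relations $\le_1$, $\le_2$ and $\le_3$ are partial orders on $\mathbf K_{\rm fnq}$.
   Context: $\mathbf K_{\rm fnq}$ is the class of structures $M$ in the vocabulary consisting of unary predicates $P,Q$, a ternary relation $E$, and $n$-ary relations $Q_{n,k}$ ($n,k\ge1$), such that: (a) $P^M,Q^M$ partition the universe of $M$ and $P^M\neq\emptyset$; (b) $E^M\subseteq P^M\times P^M\times Q^M$, and we write $aE^M_cb$ for $(a,b,c)\in E^M$; (c) for $c\in Q^M$, $E^M_c$ is an equivalence relation on $P^M$ and $\sup\{|a/E^M_c|:a\in P^M\}$ is finite; (d) $Q^M_{n,k}\subseteq (Q^M)^n$; (e) for $\bar c=\langle c_\ell:\ell<n\rangle\in{}^n(Q^M)$, $E^M_{\bar c}$ denotes the equivalence relation on $P^M$ generated by $\bigcup_\ell E^M_{c_\ell}$; (f) ${}^n(Q^M)=\bigcup_{k\ge1}Q^M_{n,k}$; (g) if $\bar c\in Q^M_{n,k}$ then $|a/E^M_{\bar c}|\le k$ for every $a\in P^M$. For $M,N\in\mathbf K_{\rm fnq}$: $M\le_1N$ iff $M$ is a substructure of $N$. $M\le_3N$ iff $M\subseteq N$ and for every countable $A\subseteq N$ with $A\cap Q^N$ finite there is a one-to-one homomorphism (e.g. an embedding) from $N{\restriction}A$ into $M$ which is the identity on $A\cap M$. $M\le_2N$ is defined like $\le_3$ but only for finite $A\subseteq N$. *)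

(* Defs.v *)
(* Structures of the vocabulary {P, Q, E, Q_{n,k}} whose
   universes are subsets of an ambient type U (so that "substructure" and
   equality of structures have their set-theoretic meaning). *)
From Stdlib Require Import List Relations Arith.
Import ListNotations.

Record fstr (U : Type) : Type := MkFstr {
  dom : U -> Prop;
  Pp  : U -> Prop;
  Qp  : U -> Prop;
  Er  : U -> U -> U -> Prop;             (* E^M(a,b,c), written a E_c b *)
  Qr  : nat -> nat -> list U -> Prop     (* Q^M_{n,k}, tuples as lists *)
}.
Arguments dom {U}. Arguments Pp {U}. Arguments Qp {U}.
Arguments Er {U}. Arguments Qr {U}.

Definition card_le {U : Type} (X : U -> Prop) (m : nat) : Prop :=
  forall l : list U, NoDup l -> (forall x, In x l -> X x) -> length l <= m.

Definition Ebar {U : Type} (M : fstr U) (cs : list U) : U -> U -> Prop :=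
  clos_refl_sym_trans U (fun x y => exists c, In c cs /\ Er M x y c).

Definition in_Kfnq {U : Type} (M : fstr U) : Prop :=
  (forall x, Pp M x -> dom M x) /\ (forall x, Qp M x -> dom M x) /\
  (forall x, dom M x -> Pp M x \/ Qp M x) /\
  (forall x, Pp M x -> Qp M x -> False) /\
  (exists x, Pp M x) /\
  (forall a b c, Er M a b c -> Pp M a /\ Pp M b /\ Qp M c) /\
  (forall c, Qp M c ->
     (forall a, Pp M a -> Er M a a c) /\
     (forall a b, Er M a b c -> Er M b a c) /\
     (forall a b d, Er M a b c -> Er M b d c -> Er M a d c) /\
     (exists m, forall a, Pp M a -> card_le (fun b => Er M a b c) m)) /\
  (* (d) and the vocabulary: n, k >= 1 *)
  (forall n k s, Qr M n k s ->
     1 <= n /\ 1 <= k /\ length s = n /\ Forall (Qp M) s) /\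
  (forall cs, 1 <= length cs -> Forall (Qp M) cs ->
     exists k, 1 <= k /\ Qr M (length cs) k cs) /\
  (forall n k cs, Qr M n k cs ->
     forall a, Pp M a -> card_le (Ebar M cs a) k).

Definition substr {U : Type} (M N : fstr U) : Prop :=
  (forall x, dom M x -> dom N x) /\
  (forall x, dom M x -> (Pp M x <-> Pp N x)) /\
  (forall x, dom M x -> (Qp M x <-> Qp N x)) /\
  (forall a b c, dom M a -> dom M b -> dom M c -> (Er M a b c <-> Er N a b c)) /\
  (forall n k s, Forall (dom M) s -> (Qr M n k s <-> Qr N n k s)).

Definition finite_set {U : Type} (A : U -> Prop) : Prop :=
  exists l : list U, forall x, A x -> In x l.

Definition countable_set {U : Type} (A : U -> Prop) : Prop :=
  exists g : U -> nat, forall x y, A x -> A y -> g x = g y -> x = y.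

Definition good_map {U : Type} (N : fstr U) (A : U -> Prop) (M : fstr U)
    (f : U -> U) : Prop :=
  (forall x, A x -> dom M (f x)) /\
  (forall x y, A x -> A y -> f x = f y -> x = y) /\
  (forall x, A x -> Pp N x -> Pp M (f x)) /\
  (forall x, A x -> Qp N x -> Qp M (f x)) /\
  (forall a b c, A a -> A b -> A c -> Er N a b c -> Er M (f a) (f b) (f c)) /\
  (forall n k s, Forall A s -> Qr N n k s -> Qr M n k (map f s)) /\
  (forall x, A x -> dom M x -> f x = x).

Definition le1 {U : Type} (M N : fstr U) : Prop :=
  in_Kfnq M /\ in_Kfnq N /\ substr M N.

Definition le2 {U : Type} (M N : fstr U) : Prop :=
  in_Kfnq M /\ in_Kfnq N /\ substr M N /\
  forall A : U -> Prop, (forall x, A x -> dom N x) -> finite_set A ->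
    exists f, good_map N A M f.

Definition le3 {U : Type} (M N : fstr U) : Prop :=
  in_Kfnq M /\ in_Kfnq N /\ substr M N /\
  forall A : U -> Prop, (forall x, A x -> dom N x) -> countable_set A ->
    finite_set (fun x => A x /\ Qp N x) ->
    exists f, good_map N A M f.

Definition partial_order_on_K {U : Type} (le : fstr U -> fstr U -> Prop) : Prop :=
  (forall M, in_Kfnq M -> le M M) /\
  (forall M N L, in_Kfnq M -> in_Kfnq N -> in_Kfnq L ->
      le M N -> le N L -> le M L) /\
  (forall M N, in_Kfnq M -> in_Kfnq N -> le M N -> le N M -> M = N).

(* Main.v *)
Require Import Defs.
From Stdlib Require Import List Relations Arith FunctionalExtensionality PropExtensionality ClassicalEpsilon.
Import ListNotations.

Section S.
Variable U : Type.

Lemma substr_refl (M : fstr U) : substr M M.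
Proof. repeat split; tauto. Qed.

Lemma substr_trans (M N L : fstr U) : substr M N -> substr N L -> substr M L.
Proof.
  intros [d1 [p1 [q1 [e1 r1]]]] [d2 [p2 [q2 [e2 r2]]]].
  repeat split; intros.
  - auto.
  - apply p2; auto; apply p1; auto.
  - apply p1; auto; apply p2; auto.
  - apply q2; auto; apply q1; auto.
  - apply q1; auto; apply q2; auto.
  - apply e2; auto; apply e1; auto.
  - apply e1; auto; apply e2; auto.
  - apply r2; [eapply Forall_impl; [|eassumption]; auto|]. apply r1; auto.
  - apply r1; auto. apply r2; [eapply Forall_impl; [|eassumption]; auto|]. auto.
Qed.

Lemma substr_antisym (M N : fstr U) : in_Kfnq M -> in_Kfnq N ->
  substr M N -> substr N M -> M = N.
Proof.
  intros HM HN [d1 [p1 [q1 [e1 r1]]]] [d2 [p2 [q2 [e2 r2]]]].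
  destruct HM as [PdM [QdM [_ [_ [_ [EM [_ [RM _]]]]]]]].
  destruct HN as [PdN [QdN [_ [_ [_ [EN [_ [RN _]]]]]]]].
  destruct M as [dM PM QM EMr RMr], N as [dN PN QN ENr RNr]; simpl in *.
  assert (dM = dN) by (extensionality x; apply propositional_extensionality; split; auto).
  assert (PM = PN) by (extensionality x; apply propositional_extensionality; split;
    intro Hx; [apply p1; auto | apply p2; auto]).
  assert (QM = QN) by (extensionality x; apply propositional_extensionality; split;
    intro Hx; [apply q1; auto | apply q2; auto]).
  assert (EMr = ENr).
  { extensionality a; extensionality b; extensionality c;
    apply propositional_extensionality; split; intro Hx.
    - destruct (EM _ _ _ Hx) as [? [? ?]]; apply e1; auto.
    - destruct (EN _ _ _ Hx) as [? [? ?]]; apply e2; auto. }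
  assert (RMr = RNr).
  { extensionality n; extensionality k; extensionality s;
    apply propositional_extensionality; split; intro Hx.
    - destruct (RM _ _ _ Hx) as [_ [_ [_ F]]]. apply r1; auto.
      eapply Forall_impl; [|exact F]; auto.
    - destruct (RN _ _ _ Hx) as [_ [_ [_ F]]]. apply r2; auto.
      eapply Forall_impl; [|exact F]; auto. }
  subst; reflexivity.
Qed.

Lemma good_id (N : fstr U) (A : U -> Prop) :
  (forall x, A x -> dom N x) -> good_map N A N (fun x => x).
Proof.
  intros H. repeat split; auto.
  intros. rewrite map_id; auto.
Qed.

Lemma good_comp (L N M : fstr U) A B g f :
  good_map L A N g -> good_map N B M f -> (forall x, A x -> B (g x)) ->
  substr M N -> good_map L A M (fun x => f (g x)).
Proof.
  intros [g1 [g2 [g3 [g4 [g5 [g6 g7]]]]]] [f1 [f2 [f3 [f4 [f5 [f6 f7]]]]]] HB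
    [d1 _].
  split; [|split; [|split; [|split; [|split; [|split]]]]]; intros; auto.
  - replace (map (fun x => f (g x)) s) with (map f (map g s)) by apply map_map.
    apply f6; auto.
    apply Forall_map. eapply Forall_impl; [|eassumption]; auto.
  - assert (g x = x) as E by (apply g7; auto). rewrite E.
    apply f7; auto. rewrite <- E; auto.
Qed.

Lemma Qpre (L N : fstr U) A g x : in_Kfnq L -> in_Kfnq N -> good_map L A N g ->
  (forall x, A x -> dom L x) -> A x -> Qp N (g x) -> Qp L x.
Proof.
  intros HL HN [_ [_ [g3 _]]] HA Ax Q.
  destruct HL as [_ [_ [D _]]]. destruct HN as [_ [_ [_ [Dis _]]]].
  destruct (D x (HA x Ax)) as [P|]; auto.
  exfalso; eapply Dis; [apply g3; eauto | eauto].
Qed.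

Lemma po1 : partial_order_on_K (@le1 U).
Proof.
  split; [|split].
  - intros M HM; split; [|split]; auto; apply substr_refl.
  - intros M N L _ _ _ [? [? ?]] [? [? ?]]; split; [|split]; auto; eapply substr_trans; eauto.
  - intros M N HM HN [_ [_ ?]] [_ [_ ?]]; apply substr_antisym; auto.
Qed.

Lemma po2 : partial_order_on_K (@le2 U).
Proof.
  split; [|split].
  - intros M HM; split; [|split; [|split]]; auto; [apply substr_refl|].
    intros A HA _. exists (fun x => x); apply good_id; auto.
  - intros M N L HM HN HL [_ [_ [s1 H1]]] [_ [_ [s2 H2]]].
    split; [|split; [|split]]; auto; [eapply substr_trans; eauto|].
    intros A HA [l Hl].
    destruct (H2 A HA (ex_intro _ l Hl)) as [g Hg].
    set (B := fun y => exists x, A x /\ g x = y).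
    destruct (H1 B) as [f Hf].
    + intros y [x [Ax <-]]. destruct Hg as [g1 _]; auto.
    + exists (map g l). intros y [x [Ax <-]]. apply in_map; auto.
    + exists (fun x => f (g x)). eapply good_comp; eauto.
      intros x Ax; exists x; auto.
  - intros M N HM HN [_ [_ [? _]]] [_ [_ [? _]]]; apply substr_antisym; auto.
Qed.

Lemma po3 : partial_order_on_K (@le3 U).
Proof.
  split; [|split].
  - intros M HM; split; [|split; [|split]]; auto; [apply substr_refl|].
    intros A HA _ _. exists (fun x => x); apply good_id; auto.
  - intros M N L HM HN HL [_ [_ [s1 H1]]] [_ [_ [s2 H2]]].
    split; [|split; [|split]]; auto; [eapply substr_trans; eauto|].
    intros A HA [h Hh] [l Hl].
    destruct (H2 A HA (ex_intro _ h Hh) (ex_intro _ l Hl)) as [g Hg].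
    set (B := fun y => exists x, A x /\ g x = y).
    destruct (H1 B) as [f Hf].
    + intros y [x [Ax <-]]. destruct Hg as [g1 _]; auto.
    + exists (fun y => h (epsilon (inhabits y) (fun x => A x /\ g x = y))).
      intros y1 y2 HB1 HB2 E.
      pose proof (epsilon_spec (inhabits y1) (fun x => A x /\ g x = y1) HB1) as [a1 e1].
      pose proof (epsilon_spec (inhabits y2) (fun x => A x /\ g x = y2) HB2) as [a2 e2].
      rewrite <- e1, <- e2. f_equal. apply Hh; auto.
    + exists (map g l). intros y [[x [Ax <-]] Q]. apply in_map. apply Hl.
      split; auto. apply (Qpre L N A g x); auto.
    + exists (fun x => f (g x)). eapply good_comp; eauto.
      intros x Ax; exists x; auto.
  - intros M N HM HN [_ [_ [? _]]] [_ [_ [? _]]]; apply substr_antisym; auto.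
Qed.

End S.

Theorem claim3p3 (U : Type) :
  partial_order_on_K (@le1 U) /\ partial_order_on_K (@le2 U) /\
  partial_order_on_K (@le3 U).
Proof. split; [apply po1|split; [apply po2|apply po3]]. Qed.
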